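(* Let $(\Omega(\mathcal{A}),\mathrm{d},\bar{\mathrm{d}})$ be a bidifferential graded algebra, and let $M,N\ge 1$. Let $X$ be an $N\times N$ matrix and $Y$ an $M\times N$ matrix with entries in $\mathcal{A}$, let $P$ be an $N\times N$ matrix and $R$ an $N\times N$ matrix with entries in $\mathcal{A}$, and let $Q$ be an $N\times M$ matrix with entries in $\mathcal{A}$, such that $\mathrm{d}R=0$ and $\mathrm{d}Q=0$. Suppose that $$\bar{\mathrm{d}}X=(\mathrm{d}X)\,P,\qquad \bar{\mathrm{d}}Y=(\mathrm{d}Y)\,P,\qquad R\,X+Q\,Y=X\,P,$$ and that $X$ is invertible. Then $\Phi:=Y X^{-1}$ satisfies $$\bar{\mathrm{d}}\,\mathrm{d}\,\Phi=(\mathrm{d}\Phi)\,Q\,(\mathrm{d}\Phi).$$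
   Context: $\mathcal{A}$ is a unital associative algebra over $\mathbb{C}$ with identity $I$. A bidifferential graded algebra $(\Omega(\mathcal{A}),\mathrm{d},\bar{\mathrm{d}})$ consists of a graded associative algebra $\Omega(\mathcal{A})=\bigoplus_{r\ge 0}\Omega^r(\mathcal{A})$ with $\Omega^0(\mathcal{A})=\mathcal{A}$ (each $\Omega^r(\mathcal{A})$ an $\mathcal{A}$-bimodule) together with two linear maps $\mathrm{d},\bar{\mathrm{d}}:\Omega^r(\mathcal{A})\to\Omega^{r+1}(\mathcal{A})$ satisfying the graded Leibniz rule $\mathrm{d}(\alpha\beta)=(\mathrm{d}\alpha)\beta+(-1)^r\alpha\,\mathrm{d}\beta$ for $\alpha\in\Omega^r(\mathcal{A})$ (and likewise for $\bar{\mathrm{d}}$), and $\mathrm{d}^2=\bar{\mathrm{d}}^2=0$, $\mathrm{d}\bar{\mathrm{d}}+\bar{\mathrm{d}}\mathrm{d}=0$. The maps $\mathrm{d},\bar{\mathrm{d}}$ are applied entrywise to matrices with entries in $\Omega(\mathcal{A})$, and products of such matrices use the matrix product together with the product of $\Omega(\mathcal{A})$. Inverses are taken in the algebra of square matrices over $\mathcal{A}$. *)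

(* Defs.v *)
From HB Require Import structures.
From mathcomp Require Import all_boot all_order all_algebra.
Set Implicit Arguments. Unset Strict Implicit. Unset Printing Implicit Defensive.
Import GRing.Theory.
Local Open Scope ring_scope.

(* Omega(A) is modelled as a single (noncommutative) K-algebra W together with
   a family of subspaces [hom r] (= Omega^r(A)) such that W is their direct sum
   and hom r * hom s ⊆ hom (r+s).  The algebra A is Omega^0(A) = hom 0, which
   contains the identity 1.  d, db are K-linear maps of degree +1. *)
Record bidga (K : fieldType) (W : algType K) := Bidga {
  hom : nat -> W -> Prop;
  d : W -> W;
  db : W -> W;
  hom_0 : forall r, hom r 0;
  hom_add : forall r x y, hom r x -> hom r y -> hom r (x + y);
  hom_scale : forall r (k : K) x, hom r x -> hom r (k *: x);
  hom_mul : forall r s x y, hom r x -> hom s y -> hom (r + s)%N (x * y);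
  hom_1 : hom 0 1;
  hom_decomp : forall x, exists (n : nat) (f : nat -> W),
      (forall r, hom r (f r)) /\ x = \sum_(r < n) f r;
  hom_direct : forall (n : nat) (f : nat -> W),
      (forall r, hom r (f r)) -> \sum_(r < n) f r = 0 ->
      forall r, (r < n)%N -> f r = 0;
  d_linear : forall (k : K) x y, d (k *: x + y) = k *: d x + d y;
  db_linear : forall (k : K) x y, db (k *: x + y) = k *: db x + db y;
  d_deg : forall r x, hom r x -> hom r.+1 (d x);
  db_deg : forall r x, hom r x -> hom r.+1 (db x);
  d_leibniz : forall r x y, hom r x ->
      d (x * y) = d x * y + (-1) ^+ r * x * d y;
  db_leibniz : forall r x y, hom r x ->
      db (x * y) = db x * y + (-1) ^+ r * x * db y;
  d_d : forall x, d (d x) = 0;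
  db_db : forall x, db (db x) = 0;
  d_db : forall x, d (db x) + db (d x) = 0
}.

Definition mx_in_A (K : fieldType) (W : algType K) (B : bidga W) (m n : nat)
  (Z : 'M[W]_(m, n)) : Prop := forall i j, hom B 0 (Z i j).

Definition dmx (K : fieldType) (W : algType K) (B : bidga W) (m n : nat)
  (Z : 'M[W]_(m, n)) : 'M[W]_(m, n) := map_mx (d B) Z.
Definition dbmx (K : fieldType) (W : algType K) (B : bidga W) (m n : nat)
  (Z : 'M[W]_(m, n)) : 'M[W]_(m, n) := map_mx (db B) Z.

(* Main.v *)
Require Import Defs.
From HB Require Import structures.
From mathcomp Require Import all_boot all_order all_algebra.
Import GRing.Theory.
Local Open Scope ring_scope.
Set Implicit Arguments. Unset Strict Implicit.

Section Aux.
Context {K : fieldType} {W : algType K} {B : bidga W}.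

Definition mxh r {m n} (Z : 'M[W]_(m, n)) := forall i j, Defs.hom B r (Z i j).

Lemma dD x y : Defs.d B (x + y) = Defs.d B x + Defs.d B y.
Proof. by have := d_linear B 1 x y; rewrite !scale1r. Qed.
Lemma dbD x y : Defs.db B (x + y) = Defs.db B x + Defs.db B y.
Proof. by have := db_linear B 1 x y; rewrite !scale1r. Qed.
Lemma d0 : Defs.d B 0 = 0.
Proof. have H := dD 0 0; rewrite addr0 in H; apply: (addrI (Defs.d B 0)); by rewrite -H addr0. Qed.
Lemma db0 : Defs.db B 0 = 0.
Proof. have H := dbD 0 0; rewrite addr0 in H; apply: (addrI (Defs.db B 0)); by rewrite -H addr0. Qed.
Lemma dN x : Defs.d B (- x) = - Defs.d B x.
Proof. by have := d_linear B (-1) x 0; rewrite d0 !addr0 !scaleN1r. Qed.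
Lemma dbN x : Defs.db B (- x) = - Defs.db B x.
Proof. by have := db_linear B (-1) x 0; rewrite db0 !addr0 !scaleN1r. Qed.
Lemma d1 : Defs.d B 1 = 0.
Proof.
have := d_leibniz 1 (hom_1 B); rewrite expr0 !mul1r mulr1 => H.
by apply: (addrI (Defs.d B 1)); rewrite -H addr0.
Qed.
Lemma db1 : Defs.db B 1 = 0.
Proof.
have := db_leibniz 1 (hom_1 B); rewrite expr0 !mul1r mulr1 => H.
by apply: (addrI (Defs.db B 1)); rewrite -H addr0.
Qed.
Lemma d_sum n (f : 'I_n -> W) : Defs.d B (\sum_i f i) = \sum_i Defs.d B (f i).
Proof. by apply: (big_morph _ dD d0). Qed.
Lemma db_sum n (f : 'I_n -> W) : Defs.db B (\sum_i f i) = \sum_i Defs.db B (f i).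
Proof. by apply: (big_morph _ dbD db0). Qed.

Lemma hom_sum r n (f : 'I_n -> W) : (forall i, Defs.hom B r (f i)) -> Defs.hom B r (\sum_i f i).
Proof. move=> H; apply: (big_ind (Defs.hom B r)) => //; [exact: (hom_0 B)|exact: hom_add]. Qed.

Lemma mxh_mul r s m n p (U : 'M[W]_(m, n)) (V : 'M[W]_(n, p)) :
  mxh r U -> mxh s V -> mxh (r + s) (U *m V).
Proof. move=> hU hV i j; rewrite mxE; apply: hom_sum => k; exact: hom_mul. Qed.
Lemma mxh_add r m n (U V : 'M[W]_(m, n)) : mxh r U -> mxh r V -> mxh r (U + V).
Proof. by move=> hU hV i j; rewrite mxE; apply: hom_add. Qed.
Lemma mxh_d r m n (U : 'M[W]_(m, n)) : mxh r U -> mxh r.+1 (dmx B U).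
Proof. by move=> hU i j; rewrite mxE; apply: d_deg. Qed.

Lemma dmxD m n (U V : 'M[W]_(m, n)) : dmx B (U + V) = dmx B U + dmx B V.
Proof. by apply/matrixP => i j; rewrite !mxE dD. Qed.
Lemma dbmxD m n (U V : 'M[W]_(m, n)) : dbmx B (U + V) = dbmx B U + dbmx B V.
Proof. by apply/matrixP => i j; rewrite !mxE dbD. Qed.
Lemma dmx1 n : dmx B (1%:M : 'M[W]_n) = 0.
Proof. apply/matrixP => i j; rewrite !mxE; case: (i == j); rewrite /= ?d1 ?d0 //. Qed.
Lemma dbmx1 n : dbmx B (1%:M : 'M[W]_n) = 0.
Proof. apply/matrixP => i j; rewrite !mxE; case: (i == j); rewrite /= ?db1 ?db0 //. Qed.
Lemma dmx_dd m n (U : 'M[W]_(m, n)) : dmx B (dmx B U) = 0.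
Proof. by apply/matrixP => i j; rewrite !mxE d_d. Qed.
Lemma dbmx_d m n (U : 'M[W]_(m, n)) : dbmx B (dmx B U) = - dmx B (dbmx B U).
Proof.
apply/matrixP => i j; rewrite !mxE; apply/eqP; rewrite -subr_eq0 opprK addrC.
by rewrite d_db.
Qed.

Lemma dmx_mul0 m n p (U : 'M[W]_(m, n)) (V : 'M[W]_(n, p)) : mxh 0 U ->
  dmx B (U *m V) = dmx B U *m V + U *m dmx B V.
Proof.
move=> hU; apply/matrixP => i j; rewrite !mxE d_sum -big_split /=.
apply: eq_bigr => k _; rewrite (d_leibniz _ (hU i k)) expr0 mul1r !mxE //.
Qed.
Lemma dbmx_mul0 m n p (U : 'M[W]_(m, n)) (V : 'M[W]_(n, p)) : mxh 0 U ->
  dbmx B (U *m V) = dbmx B U *m V + U *m dbmx B V.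
Proof.
move=> hU; apply/matrixP => i j; rewrite !mxE db_sum -big_split /=.
apply: eq_bigr => k _; rewrite (db_leibniz _ (hU i k)) expr0 mul1r !mxE //.
Qed.
Lemma dmx_mul1 m n p (U : 'M[W]_(m, n)) (V : 'M[W]_(n, p)) : mxh 1 U ->
  dmx B (U *m V) = dmx B U *m V - U *m dmx B V.
Proof.
move=> hU; apply/matrixP => i j; rewrite !mxE d_sum.
rewrite (_ : \sum_j0 U i j0 * dmx B V j0 j = \sum_j0 U i j0 * Defs.d B (V j0 j)); last first.
  by apply: eq_bigr => k _; rewrite mxE.
rewrite -sumrN -big_split /=.
apply: eq_bigr => k _; rewrite (d_leibniz _ (hU i k)) expr1 mulN1r mulNr mxE; rewrite -?mulNr.
by [].
Qed.
End Aux.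
Arguments mxh {K W} B r {m n} Z.

Theorem theorem1 (K : fieldType) (W : algType K) (B : bidga W) (M N : nat)
  (hM : (1 <= M)%N) (hN : (1 <= N)%N)
  (X : 'M[W]_(N, N)) (Y : 'M[W]_(M, N)) (P R : 'M[W]_(N, N)) (Q : 'M[W]_(N, M))
  (hX : mx_in_A B X) (hY : mx_in_A B Y) (hP : mx_in_A B P) (hR : mx_in_A B R)
  (hQ : mx_in_A B Q)
  (dR : dmx B R = 0) (dQ : dmx B Q = 0)
  (eX : dbmx B X = dmx B X *m P) (eY : dbmx B Y = dmx B Y *m P)
  (eXP : R *m X + Q *m Y = X *m P)
  (Xi : 'M[W]_(N, N)) (hXi : mx_in_A B Xi)
  (inv1 : X *m Xi = 1%:M) (inv2 : Xi *m X = 1%:M) :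
  dbmx B (dmx B (Y *m Xi)) = dmx B (Y *m Xi) *m Q *m dmx B (Y *m Xi).
Proof.
have hX' : mxh B 0 X by [].
have hY' : mxh B 0 Y by [].
have hXi' : mxh B 0 Xi by [].
have hPhi : mxh B 0 (Y *m Xi) by move=> i j; have := mxh_mul hY' hXi' i j.
set Phi := Y *m Xi in hPhi *.
set F := dmx B Phi.
have hF : mxh B 1 F by exact: mxh_d.
have dXi : dmx B Xi = - (Xi *m dmx B X *m Xi).
  have := dmx_mul0 Xi hX'; rewrite inv1 dmx1 => /esym /eqP.
  rewrite addrC addr_eq0 => /eqP H.
  by rewrite -[dmx B Xi]mul1mx -inv2 -mulmxA H mulmxN mulmxA.
have dbXi : dbmx B Xi = - (Xi *m dbmx B X *m Xi).
  have := dbmx_mul0 Xi hX'; rewrite inv1 dbmx1 => /esym /eqP.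
  rewrite addrC addr_eq0 => /eqP H.
  by rewrite -[dbmx B Xi]mul1mx -inv2 -mulmxA H mulmxN mulmxA.
have FE : F = (dmx B Y - Phi *m dmx B X) *m Xi.
  by rewrite /F /Phi dmx_mul0 // dXi mulmxBl !mulmxN !mulmxA.
have FX : F *m X = dmx B Y - Phi *m dmx B X.
  by rewrite FE -mulmxA inv2 mulmx1.
have PXi : P *m Xi = Xi *m R + Xi *m Q *m Phi.
  rewrite -[P]mul1mx -inv2 -(mulmxA Xi X P) -eXP mulmxDr mulmxDl -!mulmxA inv1 mulmx1.
  by rewrite /Phi !mulmxA.
have G : dbmx B Phi = F *m (R + Q *m Phi).
  rewrite /Phi dbmx_mul0 // dbXi eY eX -/Phi.
  rewrite mulmxN !mulmxA -/Phi.
  transitivity (F *m X *m (P *m Xi)).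
    by rewrite FX mulmxBl !mulmxA.
  rewrite PXi mulmxDr -!mulmxA !(mulmxA X Xi) inv1 !mul1mx -mulmxDr.
  by [].
rewrite /F dbmx_d G -/F dmx_mul1 // dmx_dd mul0mx add0r dmxD dR add0r dmx_mul0 // dQ.
by rewrite mul0mx add0r opprK mulmxA.
Qed.
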